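(* Let $a<b$ with $[a,b]\subset[0,\infty)$, let $f,g:[a,b]\to\mathbb{R}$ be integrable with $0\le g(t)\le1$ for all $t\in[a,b]$ and such that $\int_a^b g(t)f'(t)\,dt$ exists. Suppose $f$ is absolutely continuous on $[a,b]$ and $|f'|^q$ is $s$-concave on $[a,b]$ for some fixed $s\in(0,1]$ and some $q>1$. Let $\lambda:=\int_a^b g(t)\,dt$. Then $$\left|\int_a^{a+\lambda} f(t)\,dt-\int_a^b f(t)g(t)\,dt\right|\le2^{(s-1)/q}\left[\lambda^2\left|f'\!\left(a+\tfrac{\lambda}{2}\right)\right|+(b-a-\lambda)^2\left|f'\!\left(\tfrac{a+b+\lambda}{2}\right)\right|\right],$$ and $$\left|\int_a^b f(t)g(t)\,dt-\int_{b-\lambda}^b f(t)\,dt\right|\le2^{(s-1)/q}\left[\lambda^2\left|f'\!\left(b-\tfrac{\lambda}{2}\right)\right|+(b-a-\lambda)^2\left|f'\!\left(\tfrac{a+b-\lambda}{2}\right)\right|\right].$$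
   Context: For fixed $s\in(0,1]$, a function $h:I\to\mathbb{R}$ on an interval $I\subset[0,\infty)$ is $s$-concave (in the second sense) if $h(\alpha x+\beta y)\ge\alpha^s h(x)+\beta^s h(y)$ for all $x,y\in I$ and all $\alpha,\beta\ge0$ with $\alpha+\beta=1$. *)

(* Defs.v *)
From HB Require Import structures.
From mathcomp Require Import all_boot all_order all_algebra.
From mathcomp Require Import all_classical all_reals all_analysis.
Set Implicit Arguments. Unset Strict Implicit. Unset Printing Implicit Defensive.
Import Order.TTheory GRing.Theory Num.Theory.
Import numFieldNormedType.Exports.
Local Open Scope classical_set_scope.
Local Open Scope ring_scope.

Definition s_concave {R : realType} (s : R) (I : set R) (h : R -> R) : Prop :=
  forall x y : R, I x -> I y ->
  forall al be : R, 0 <= al -> 0 <= be -> al + be = 1 ->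
    al `^ s * h x + be `^ s * h y <= h (al * x + be * y).

Definition abs_cont_on {R : realType} (a b : R) (f : R -> R) : Prop :=
  forall e : R, 0 < e -> exists2 d : R, 0 < d &
    forall (n : nat) (u v : nat -> R),
      (forall i, (i < n)%N -> a <= u i /\ u i <= v i /\ v i <= b) ->
      (forall i j, (i < j)%N -> (j < n)%N -> v i <= u j) ->
      \sum_(i < n) (v i - u i) < d ->
      \sum_(i < n) `|f (v i) - f (u i)| < e.

(* Main.v *)
Require Import Defs.
From HB Require Import structures.
From mathcomp Require Import all_boot all_order all_algebra.
From mathcomp Require Import all_classical all_reals all_analysis.
From mathcomp Require Import ring lra.
Import Order.TTheory GRing.Theory Num.Theory.
Import numFieldNormedType.Exports.
Local Open Scope classical_set_scope.
Local Open Scope ring_scope.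
Set Implicit Arguments. Unset Strict Implicit. Unset Printing Implicit Defensive.
Lemma loc_lip {R : realType} (f : R -> R) (t d K : R) :
  is_derive t 1 f d -> `|d| < K ->
  exists2 r : R, 0 < r & forall u, `|u - t| < r -> `|f u - f t| <= K * `|u - t|.
Proof.
move=> [Hd Hv] dK.
have Hc : (fun h => h^-1 *: ((f \o shift t) (h *: 1) - f t)) @ 0^' --> d.
  by rewrite -Hv; exact: Hd.
have e0 : 0 < K - `|d| by rewrite subr_gt0.
have := @cvgr_dist_lt _ _ _ _ _ _ _ Hc _ e0.
rewrite near_withinE near_simpl.
move=> /(_ _) /nbhs_ballP [r /= r0 Hr].
exists r => // u ur.
have := Hr (u - t).
have [->|ut] := eqVneq u t; first by rewrite !subrr normr0 mulr0.
have ut0 : u - t != 0 by rewrite subr_eq0.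
move=> /(_ _ ut0) H.
have {H} : `|d - (u - t)^-1 * (f u - f t)| < K - `|d|.
  have e : (u - t)%:A + t = u by rewrite /GRing.scale /= mulr1 subrK.
  have Hb : ball 0 r (u - t) by rewrite /ball /= sub0r normrN.
  by move: (H Hb); rewrite e.
move=> H.
have Hq : `|(u - t)^-1 * (f u - f t)| <= K.
  rewrite -[(u - t)^-1 * _](subrKC d) .
  apply: (le_trans (ler_normD _ _)).
  rewrite addrC -lerBrDr. apply: ltW. by rewrite distrC.
have -> : f u - f t = (u - t) * ((u - t)^-1 * (f u - f t)).
  by rewrite mulrA mulfV // mul1r.
by rewrite normrM mulrC ler_wpM2r.
Qed.
Lemma sum_len_le {R : realType} (U : set R) (n : nat) (u v : nat -> R) :
  measurable U ->
  (forall i, (i < n)%N -> u i <= v i /\ `[u i, v i[%classic `<=` U) ->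
  (forall i j, (i < j)%N -> (j < n)%N -> v i <= u j) ->
  ((\sum_(i < n) (v i - u i))%:E <= lebesgue_measure U)%E.
Proof.
move=> mU H1 H2.
pose F i := if (i < n)%N then `[u i, v i[%classic else set0.
have mF i : measurable (F i) by rewrite /F; case: ifP.
have tF : trivIset setT F.
  move=> i j _ _ [z []]; rewrite /F.
  case: ifP => // hi; case: ifP => // hj.
  rewrite /= !in_itv /= => /andP[ui vi] /andP[uj vj].
  have [ij|ji|//] := ltngtP i j.
  - have h := H2 _ _ ij hj.
    by have := lt_le_trans vi (le_trans h uj); rewrite ltxx.
  - have h := H2 _ _ ji hi.
    by have := lt_le_trans vj (le_trans h ui); rewrite ltxx.
have := @measure_bigsetU _ _ _ (@lebesgue_measure R) F mF tF n.
have -> : (\sum_(i < n) lebesgue_measure (F i) = \sum_(i < n) ((v i - u i)%:E))%E.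
  apply: eq_bigr => i _; rewrite /F ltn_ord lebesgue_measure_itv /= lte_fin.
  have [uv|] := ltP (u i) (v i); first by [].
  move=> h2; have h1 := (H1 i (ltn_ord i)).1.
  have -> : v i = u i by apply/eqP; rewrite eq_le h2 h1.
  by rewrite subrr.
rewrite sumEFin => <-.
apply: le_measure; rewrite ?inE.
- by apply: (@bigsetU_measurable _ _ _ _ _ (fun i : 'I_n => F i)) => i _; apply: mF.
- by [].
move=> z Hz; have [k _] := @bigsetU_bigcup _ F n z Hz; rewrite /F; case: ifP => // hk; exact: (H1 k hk).2.
Qed.
Definition famP {R : realType} (U : set R) (f : R -> R) (K x t : R) (n : nat)
  (u v : nat -> R) :=
  [/\ (forall i, (i < n)%N ->
        [/\ x <= u i, u i <= v i, v i <= t & `[u i, v i[%classic `<=` U]),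
      (forall i j, (i < j)%N -> (j < n)%N -> v i <= u j) &
      `|f t - f x| <= K * (t - x) + \sum_(i < n) `|f (v i) - f (u i)| ].

Lemma ac_lip_eps (R : realType) (a b K e : R) (f df : R -> R) (N : set R) (x y : R) :
  abs_cont_on a b f -> measurable N -> lebesgue_measure N = 0%E ->
  (forall t, a <= t <= b -> ~ N t -> is_derive t 1 f (df t)) ->
  a <= x -> x <= y -> y <= b ->
  (forall t, x <= t <= y -> `|df t| < K) -> 0 < e ->
  `|f y - f x| <= K * (y - x) + e.
Proof.
move=> ac mN N0 hder ax xy yb hK e0.
have K0 : 0 < K by apply: le_lt_trans (hK x _); rewrite ?lexx ?xy.
have [d d0 hd] := ac e e0.
have Nfin : (lebesgue_measure N < +oo)%E by rewrite N0 ltey.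
have [U [oU NU UNd]] := @lebesgue_regularity_outer R N d mN Nfin d0.
have mU : measurable U := measurable_realfun.open_measurable oU.
have Ud : (lebesgue_measure U < d%:E)%E.
  rewrite (@measureDI _ _ _ (@lebesgue_measure R) U N mU mN).
  have h : (lebesgue_measure (U `&` N) <= lebesgue_measure N)%E.
    by apply: le_measure; rewrite ?inE //; exact: measurableI.
  apply: le_lt_trans UNd; rewrite -[leRHS]adde0; apply: leeD; first exact: lexx.
  by move: h; rewrite N0.
pose S := [set t | x <= t <= y /\ exists n u v, famP U f K x t n u v].
have Sx : S x.
  split; first by rewrite lexx xy.
  exists 0%N, (fun=> 0), (fun=> 0); split => //.
  by rewrite big_ord0 subrr normr0 subrr mulr0 addr0.
have Sub : ubound S y by move=> t [/andP[_ ->]].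
have hS : has_sup S by split; [exists x | exists y].
set T := sup S.
have xT : x <= T by apply: sup_upper_bound.
have Ty : T <= y by apply: ge_sup => //; exists x.
have step : exists2 r, 0 < r & forall t T', S t -> T - r < t ->
    T <= T' <= y -> T' < T + r -> S T'.
  have [NT|NT] := pselect (N T).
  - have : nbhs T U by move: oU; rewrite openE => /(_ T (NU T NT)).
    move=> /nbhs_ballP [r /= r0 Hr]; exists r => // t T' St tT /andP[TT' T'y] T'T.
    have tT1 : t <= T := sup_upper_bound hS St.
    move: St => [/andP[xt ty] [n [u [v [h1 h2 h3]]]]].
    have tT' : t <= T' := le_trans tT1 TT'.
    split; first by rewrite (le_trans xt tT') T'y.
    exists n.+1, (fun i => if i == n then t else u i),
      (fun i => if i == n then T' else v i); split.
    + move=> i; rewrite ltnS leq_eqVlt => /orP[/eqP ->|ilt]; rewrite ?eqxx.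
      * split => //.
        move=> z /=; rewrite in_itv /= => /andP[tz zT']; apply: Hr.
        rewrite /ball /= ltr_distlC; apply/andP; split; lra.
      * rewrite (ltn_eqF ilt); have [? ? ? ?] := h1 i ilt; split => //.
        exact: le_trans tT'.
    + move=> i j ij; rewrite ltnS leq_eqVlt => /orP[/eqP jn|jlt].
      * subst j; by rewrite eqxx (ltn_eqF ij); have [_ _ vt _] := h1 i ij.
      * by rewrite (ltn_eqF jlt) (ltn_eqF (ltn_trans ij jlt)); exact: h2.
    + rewrite big_ord_recr /= eqxx.
      rewrite (eq_bigr (fun i : 'I_n => `|f (v i) - f (u i)|)); last first.
        by move=> i _; rewrite (ltn_eqF (ltn_ord i)).
      have := ler_distD (f t) (f T') (f x).
      have : K * t <= K * T' by rewrite ler_pM2l.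
      lra.
  - have aT : a <= T <= b by apply/andP; split; [exact: le_trans xT|exact: le_trans yb].
    have hKT : `|df T| < K by apply: hK; rewrite xT Ty.
    have [r r0 Hr] := loc_lip (hder T aT NT) hKT.
    exists r => // t T' St tT /andP[TT' T'y] T'T.
    have tT1 : t <= T := sup_upper_bound hS St.
    move: St => [/andP[xt ty] [n [u [v [h1 h2 h3]]]]].
    have tT' : t <= T' := le_trans tT1 TT'.
    split; first by rewrite (le_trans xt tT') T'y.
    exists n, u, v; split => //.
    + move=> i ilt; have [? ? ? ?] := h1 i ilt; split => //.
      exact: le_trans tT'.
    + have := ler_distD (f T) (f T') (f x).
      have := ler_distD (f t) (f T) (f x).
      have := Hr T'; rewrite ger0_norm ?subr_ge0 // => /(_ _).
      have h4 : T' - T < r by lra.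
      move=> /(_ h4) H1.
      have := Hr t; rewrite (distrC t T) (ger0_norm (_ : 0 <= T - t)) ?subr_ge0 // => /(_ _).
      have h5 : T - t < r by lra.
      move=> /(_ h5) H2.
      have H2' : `|f T - f t| <= K * (T - t) by rewrite distrC.
      have : K * t <= K * T' by rewrite ler_pM2l.
      lra.
have [r r0 hr] := step.
have r20 : 0 < r / 2 by rewrite divr_gt0.
have [t St tT] := sup_adherent r0 hS.
have Sy : S y.
  have [yT|Ty'] := ltP y (T + r / 2).
  - by apply: (hr t y) => //; [rewrite Ty lexx | lra].
  - have : S (T + r / 2) by apply: (hr t) => //; [apply/andP; split; lra | lra].
    move=> /(sup_upper_bound hS); rewrite -/T; lra.
move: Sy => [_ [n [u [v [h1 h2 h3]]]]].
have hsum : \sum_(i < n) `|f (v i) - f (u i)| < e.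
  apply: hd => //.
  - move=> i ilt; have [? ? ? ?] := h1 i ilt; split; first exact: le_trans ax _.
    split => //; exact: le_trans yb.
  - rewrite -lte_fin; apply: le_lt_trans Ud.
    apply: sum_len_le => // i ilt; have [? ? ? ?] := h1 i ilt; by split.
lra.
Qed.
Lemma ac_lip (R : realType) (a b K : R) (f df : R -> R) (N : set R) (x y : R) :
  abs_cont_on a b f -> measurable N -> lebesgue_measure N = 0%E ->
  (forall t, a <= t <= b -> ~ N t -> is_derive t 1 f (df t)) ->
  a <= x -> x <= y -> y <= b ->
  (forall t, x <= t <= y -> `|df t| <= K) ->
  `|f y - f x| <= K * (y - x).
Proof.
move=> ac mN N0 hder ax xy yb hK.
apply/ler_addgt0Pr => e e0.
have p0 : 0 < y - x + 1 by lra.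
set e' := e / (y - x + 1).
have e'0 : 0 < e' by rewrite divr_gt0.
have he : e' * (y - x + 1) = e by rewrite /e' divfK // gt_eqF.
have := ac_lip_eps (K := K + e') ac mN N0 hder ax xy yb _ e'0.
move=> /(_ _) H.
have {}H : `|f y - f x| <= (K + e') * (y - x) + e'.
  apply: H => t ht; have := hK t ht; lra.
lra.
Qed.
Lemma sconc_bound (R : realType) (a b s q p p' t : R) (df : R -> R) :
  0 < s -> 0 < q ->
  s_concave s `[a, b]%classic (fun t => `|df t| `^ q) ->
  a <= p -> p <= t -> t <= p' -> p' <= b ->
  `|df t| <= 2 `^ (s / q) * `|df ((p + p') / 2)|.
Proof.
move=> s0 q0 hs ap pt tp' p'b.
set m := (p + p') / 2.
set h := fun t => `|df t| `^ q.
have H : (1/2) `^ s * h t <= h m.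
  have Ht : `[a, b]%classic t by rewrite /= in_itv /=; apply/andP; split; lra.
  have Ht' : `[a, b]%classic (p + p' - t).
    by rewrite /= in_itv /=; apply/andP; split; lra.
  have h0 : (0 : R) <= 1 / 2 by lra.
  have h1 : (1 / 2 + 1 / 2 : R) = 1 by lra.
  have := hs t (p + p' - t) Ht Ht' (1/2) (1/2) h0 h0 h1.
  have -> : 1 / 2 * t + 1 / 2 * (p + p' - t) = m by rewrite /m; field.
  have : 0 <= (1/2) `^ s * h (p + p' - t) by rewrite mulr_ge0 ?powR_ge0.
  rewrite /h; lra.
have H2 : h t <= 2 `^ s * h m.
  have e : 2 `^ s * (1 / 2) `^ s = 1 :> R.
    by rewrite -powRM ?mulf_div ?mul1r ?divff ?powR1 //; lra.
  have -> : h t = 2 `^ s * ((1 / 2) `^ s * h t) by rewrite mulrA e mul1r.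
  by rewrite ler_pM2l // powR_gt0.
have hq : q * q^-1 = 1 by rewrite divff // gt_eqF.
have E : forall z : R, 0 <= z -> (z `^ q) `^ q^-1 = z.
  by move=> z z0; rewrite -powRrM hq powRr1.
rewrite -(E `|df t|) // -(E `|df m|) //.
rewrite -[2 `^ (s / q)]/(2 `^ (s * q^-1)) powRrM -powRM ?powR_ge0 //.
apply: ge0_ler_powR; rewrite ?invr_ge0 ?(ltW q0) // ?nnegrE ?powR_ge0 ?mulr_ge0 ?powR_ge0 //.
Qed.
Lemma int_lin_l (R : realType) (u w : R) : u <= w ->
  \int[lebesgue_measure]_(t in `[u, w]) (t - u) = (w - u) ^+ 2 / 2.
Proof.
move=> uw; have [<-|uw'] := eqVneq u w.
  by rewrite set_itv1 Rintegral_set1 subrr expr0n /= mul0r.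
have lt : u < w by rewrite lt_neqAle uw' uw.
pose F := fun t : R => (t - u) ^+ 2 / 2.
have dF : forall z : R, is_derive z 1 F (z - u).
  move=> z; apply: is_derive_eq.
  by rewrite scaler0 scaler0 add0r subr0 /GRing.scale /=; field.
have cF : continuous F.
  move=> y; apply: cvgM; last exact: cvg_cst.
  apply: (@cvg_comp _ _ _ (fun t => t - u) (fun x => x ^+ 2)).
    by apply: cvgB; [exact: cvg_id|exact: cvg_cst].
  exact: exprn_continuous.
rewrite /Rintegral.
apply: (@eq_trans _ _ (fine ((F w)%:E - (F u)%:E)%E)); last first.
  by rewrite /F subrr expr0n /= mul0r subr0.
congr fine; apply: (@continuous_FTC2 _ (fun t => t - u) F u w lt).
- apply: continuous_in_subspaceT => x _.
  by apply: cvgB; [exact: cvg_id|exact: cvg_cst].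
- split.
  + by move=> z _; case: (dF z).
  + by apply: cvg_at_right_filter; exact: cF.
  + by apply: cvg_at_left_filter; exact: cF.
- by move=> z _; rewrite derive1E; case: (dF z).
Qed.
Lemma cont_int (R : realType) (u w : R) (h : R -> R) : continuous h ->
  (@lebesgue_measure R).-integrable `[u, w] (EFin \o h).
Proof.
move=> ch; apply: continuous_compact_integrable; first exact: segment_compact.
by apply: continuous_in_subspaceT => x _; exact: ch.
Qed.

Lemma measure_itv_cc (R : realType) (u w : R) : u <= w ->
  fine (@lebesgue_measure R `[u, w]%classic) = w - u.
Proof.
move=> uw; rewrite lebesgue_measure_itv /= lte_fin.
have [uw'|] := ltP u w; first by [].
move=> wu; have -> : w = u by apply/eqP; rewrite eq_le wu uw.
by rewrite subrr.
Qed.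

Lemma int_lin_r (R : realType) (u w : R) : u <= w ->
  \int[lebesgue_measure]_(t in `[u, w]) (w - t) = (w - u) ^+ 2 / 2.
Proof.
move=> uw.
rewrite (@eq_Rintegral _ _ _ (@lebesgue_measure R) _ (fun t : R => (w - u) - (t - u))); last first.
  by move=> t _; rewrite opprB addrA subrK.
rewrite RintegralB //; last 2 first.
- by apply: cont_int; exact: cst_continuous.
- by apply: cont_int => x; apply: cvgB; [exact: cvg_id|exact: cvg_cst].
rewrite int_lin_l // Rintegral_cst // measure_itv_cc //.
by field.
Qed.
Lemma int_bound (R : realType) (u w fc : R) (f wt k : R -> R) :
  (@lebesgue_measure R).-integrable `[u, w] (EFin \o f) ->
  measurable_fun `[u, w] wt ->
  (forall t, u <= t <= w -> 0 <= wt t <= 1) -> continuous k ->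
  (forall t, u <= t <= w -> `|f t - fc| <= k t) ->
  `|\int[lebesgue_measure]_(t in `[u, w]) ((f t - fc) * wt t)|
     <= \int[lebesgue_measure]_(t in `[u, w]) k t.
Proof.
move=> fi mw hw ck hk.
have mD : measurable (`[u, w]%classic : set (measurableTypeR R)) by [].
have fci : (@lebesgue_measure R).-integrable `[u, w] (EFin \o (fun t => f t - fc)).
  have := integrableB mD fi (cont_int u w (@cst_continuous _ _ fc)).
  by apply: eq_integrable => // x _.
have hi : (@lebesgue_measure R).-integrable `[u, w]
    (EFin \o (fun t => (f t - fc) * wt t)).
  have := integrableMl mD fci mw.
  move=> /(_ _) H.
  have : [bounded wt x | x in `[u, w]%classic].
    exists 1; split => // M M1 x; rewrite /= in_itv /= => hx.
    have /andP[w0 w1] := hw x hx.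
    by rewrite ger0_norm // (le_trans w1) // ltW.
  by move=> /H; apply: eq_integrable => // x _.
apply: le_trans (le_normr_Rintegral mD hi) _.
apply: le_Rintegral => //.
- exact: integrable_norm hi.
- exact: cont_int.
move=> x; rewrite /= in_itv /= => hx.
have /andP[w0 w1] := hw x hx.
rewrite normrM (ger0_norm w0).
apply: le_trans (hk x hx).
by rewrite ler_piMr.
Qed.
Notation LM := (@lebesgue_measure _).

Lemma intS (R : realType) (u v u' v' : R) (h : R -> R) :
  u <= u' -> v' <= v -> LM.-integrable `[u, v] (EFin \o h) ->
  LM.-integrable `[u', v'] (EFin \o h).
Proof.
move=> uu vv; apply: integrableS => //.
move=> x /=; rewrite !in_itv /= => /andP[h1 h2]; apply/andP; split.
  exact: le_trans h1.
exact: le_trans vv.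
Qed.

Lemma intMw (R : realType) (u v : R) (f w : R -> R) :
  LM.-integrable `[u, v] (EFin \o f) -> LM.-integrable `[u, v] (EFin \o w) ->
  (forall t, u <= t <= v -> 0 <= w t <= 1) ->
  LM.-integrable `[u, v] (EFin \o (fun t => f t * w t)).
Proof.
move=> fi wi hw.
have mD : measurable (`[u, v]%classic : set (measurableTypeR R)) by [].
have mw : measurable_fun `[u, v] w.
  by apply/measurable_realfun.measurable_EFinP; exact: (measurable_int _ wi).
have := integrableMl mD fi mw.
move=> /(_ _) H.
have : [bounded w x | x in `[u, v]%classic].
  exists 1; split => // M M1 x; rewrite /= in_itv /= => hx.
  have /andP[w0 w1] := hw x hx.
  by rewrite ger0_norm // (le_trans w1) // ltW.
by move=> /H; apply: eq_integrable => // x _.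
Qed.

Lemma split_int (R : realType) (a b c : R) (h : R -> R) :
  a <= c -> c <= b -> LM.-integrable `[a, b] (EFin \o h) ->
  \int[LM]_(t in `[a, b]) h t =
  \int[LM]_(t in `[a, c]) h t + \int[LM]_(t in `[c, b]) h t.
Proof.
move=> ac cb hi.
have := Rintegral_itvB hi (x := c) _ _.
rewrite !bnd_simp => /(_ ac cb) H.
rewrite -(@Rintegral_itv_obnd_cbnd _ c); last by apply: integrableS hi => //; apply: subset_itvr; rewrite bnd_simp.
by rewrite -H addrC subrK.
Qed.
Lemma intB' (R : realType) (u v : R) (h1 h2 : R -> R) :
  LM.-integrable `[u, v] (EFin \o h1) -> LM.-integrable `[u, v] (EFin \o h2) ->
  LM.-integrable `[u, v] (EFin \o (fun t => h1 t - h2 t)).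
Proof.
move=> i1 i2.
have mD : measurable (`[u, v]%classic : set (measurableTypeR R)) by [].
have := integrableB mD i1 i2.
by apply: eq_integrable => // x _.
Qed.

Lemma intZ' (R : realType) (u v r : R) (h : R -> R) :
  LM.-integrable `[u, v] (EFin \o h) ->
  LM.-integrable `[u, v] (EFin \o (fun t => r * h t)).
Proof.
move=> i.
have mD : measurable (`[u, v]%classic : set (measurableTypeR R)) by [].
have := integrableZl mD r i.
by apply: eq_integrable => // x _.
Qed.

Lemma csti (R : realType) (u v r : R) :
  LM.-integrable `[u, v] (EFin \o (fun=> r)).
Proof. by apply: cont_int => x; exact: cvg_cst. Qed.

Lemma main_split (R : realType) (a b c K1 K2 : R) (f w : R -> R) :
  a <= c -> c <= b ->
  LM.-integrable `[a, b] (EFin \o f) -> LM.-integrable `[a, b] (EFin \o w) ->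
  (forall t, a <= t <= b -> 0 <= w t <= 1) ->
  \int[LM]_(t in `[a, b]) w t = c - a ->
  (forall t, a <= t <= c -> `|f t - f c| <= K1 * (c - t)) ->
  (forall t, c <= t <= b -> `|f t - f c| <= K2 * (t - c)) ->
  `|\int[LM]_(t in `[a, c]) f t - \int[LM]_(t in `[a, b]) (f t * w t)|
    <= K1 * ((c - a) ^+ 2 / 2) + K2 * ((b - c) ^+ 2 / 2).
Proof.
move=> ac cb fi wi hw wint h1 h2.
have fwi := intMw fi wi hw.
have fi1 := intS (lexx a) cb fi.
have fi2 := intS ac (lexx b) fi.
have wi1 := intS (lexx a) cb wi.
have wi2 := intS ac (lexx b) wi.
have fwi1 := intS (lexx a) cb fwi.
have fwi2 := intS ac (lexx b) fwi.
have hwc : forall t, a <= t <= c -> 0 <= w t <= 1.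
  move=> t /andP[a_t t_c]; apply: hw; rewrite a_t /=; exact: le_trans cb.
have hwc' : forall t, a <= t <= c -> 0 <= 1 - w t <= 1.
  move=> t ht; have /andP[w0 w1] := hwc t ht; apply/andP; split; lra.
have hwb : forall t, c <= t <= b -> 0 <= w t <= 1.
  move=> t /andP[c_t t_b]; apply: hw; rewrite t_b andbT; exact: le_trans c_t.
have mwc : measurable_fun `[a, c] (fun t => 1 - w t).
  apply/measurable_realfun.measurable_EFinP.
  exact: (measurable_int _ (intB' (csti a c 1) wi1)).
have mwb : measurable_fun `[c, b] w.
  apply/measurable_realfun.measurable_EFinP; exact: (measurable_int _ wi2).
have mD u v : measurable (`[u, v]%classic : set (measurableTypeR R)) by [].
have EA : \int[LM]_(t in `[a, c]) ((f t - f c) * (1 - w t)) =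
   (\int[LM]_(t in `[a, c]) f t - \int[LM]_(t in `[a, c]) (f t * w t))
   - (f c * (c - a) - f c * \int[LM]_(t in `[a, c]) w t).
  rewrite (@eq_Rintegral _ _ _ LM _
     (fun t : R => (f t - f t * w t) - (f c - f c * w t))); last first.
    by move=> t _; ring.
  rewrite RintegralB //; last 2 first.
  - exact: intB' fi1 fwi1.
  - exact: intB' (csti _ _ _) (intZ' _ wi1).
  rewrite RintegralB // RintegralB //; last 2 first.
  - exact: csti.
  - exact: intZ' _ wi1.
  by rewrite Rintegral_cst // measure_itv_cc // RintegralZl.
have EB : \int[LM]_(t in `[c, b]) ((f t - f c) * w t) =
   \int[LM]_(t in `[c, b]) (f t * w t) - f c * \int[LM]_(t in `[c, b]) w t.
  rewrite (@eq_Rintegral _ _ _ LM _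
     (fun t : R => f t * w t - f c * w t)); last first.
    by move=> t _; ring.
  by rewrite RintegralB // ?RintegralZl //; exact: intZ' _ wi2.
have BA : `|\int[LM]_(t in `[a, c]) ((f t - f c) * (1 - w t))|
    <= K1 * ((c - a) ^+ 2 / 2).
  rewrite -int_lin_r // -RintegralZl //; last first.
    by apply: cont_int => x; apply: cvgB; [exact: cvg_cst|exact: cvg_id].
  apply: int_bound; [exact: fi1 | exact: mwc | exact: hwc' | |].
  - by move=> x; apply: cvgM; [exact: cvg_cst | apply: cvgB; [exact: cvg_cst|exact: cvg_id]].
  - by move=> t ht; exact: h1.
have BB : `|\int[LM]_(t in `[c, b]) ((f t - f c) * w t)|
    <= K2 * ((b - c) ^+ 2 / 2).
  rewrite -int_lin_l // -RintegralZl //; last first.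
    by apply: cont_int => x; apply: cvgB; [exact: cvg_id|exact: cvg_cst].
  apply: int_bound; [exact: fi2 | exact: mwb | exact: hwb | |].
  - by move=> x; apply: cvgM; [exact: cvg_cst | apply: cvgB; [exact: cvg_id|exact: cvg_cst]].
  - by move=> t ht; exact: h2.
rewrite (split_int ac cb fwi).
move: wint; rewrite (split_int ac cb wi) => wint.
have -> : \int[LM]_(t in `[a, c]) f t -
    (\int[LM]_(t in `[a, c]) (f t * w t) + \int[LM]_(t in `[c, b]) (f t * w t)) =
  \int[LM]_(t in `[a, c]) ((f t - f c) * (1 - w t))
  - \int[LM]_(t in `[c, b]) ((f t - f c) * w t).
  rewrite EA EB -wint; ring.
apply: le_trans (ler_normB _ _) _.
exact: lerD.
Qed.
Lemma lip_piece (R : realType) (a b s q p p' : R) (f df : R -> R) (N : set R) :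
  0 < s -> 0 < q ->
  s_concave s `[a, b]%classic (fun t => `|df t| `^ q) ->
  abs_cont_on a b f -> measurable N -> lebesgue_measure N = 0%E ->
  (forall t, a <= t <= b -> ~ N t -> is_derive t 1 f (df t)) ->
  a <= p -> p <= p' -> p' <= b ->
  (forall t, p <= t <= p' ->
     `|f t - f p'| <= 2 `^ (s / q) * `|df ((p + p') / 2)| * (p' - t)) /\
  (forall t, p <= t <= p' ->
     `|f t - f p| <= 2 `^ (s / q) * `|df ((p + p') / 2)| * (t - p)).
Proof.
move=> s0 q0 hs ac mN N0 hder ap pp p'b.
have hK : forall t, p <= t <= p' -> `|df t| <= 2 `^ (s / q) * `|df ((p + p') / 2)|.
  move=> t /andP[pt tp']; exact: (sconc_bound s0 q0 hs ap pt tp' p'b).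
split => t /andP[pt tp'].
- rewrite distrC; apply: (ac_lip ac mN N0 hder) => //.
  + exact: le_trans pt.
  + by move=> z /andP[tz zp']; apply: hK; rewrite zp' (le_trans pt tz).
- apply: (ac_lip ac mN N0 hder) => //.
  + exact: le_trans p'b.
  + by move=> z /andP[pz zt]; apply: hK; rewrite pz (le_trans zt tp').
Qed.

Lemma pow_half (R : realType) (s q : R) : 1 <= q ->
  2 `^ (s / q) / 2 <= 2 `^ ((s - 1) / q).
Proof.
move=> q1.
have q0 : 0 < q by lra.
rewrite ler_pdivrMr //.
have -> : 2 `^ ((s - 1) / q) * 2 = 2 `^ ((s - 1) / q + 1) :> R.
  rewrite powRD; last by rewrite pnatr_eq0 implybT.
  by rewrite powRr1.
apply: ler_powR; first lra.
rewrite -subr_ge0.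
have -> : (s - 1) / q + 1 - s / q = (q - 1) / q by field; rewrite gt_eqF.
by rewrite divr_ge0 // ?subr_ge0 // ltW.
Qed.
Unset Implicit Arguments.
Theorem theorem2p7 (R : realType) (a b s q : R) (f g df : R -> R) :
  0 <= a -> a < b ->
  0 < s -> s <= 1 -> 1 < q ->
  (@lebesgue_measure R).-integrable `[a, b] (EFin \o f) ->
  (@lebesgue_measure R).-integrable `[a, b] (EFin \o g) ->
  (forall t, a <= t <= b -> 0 <= g t <= 1) ->
  (@lebesgue_measure R).-integrable `[a, b] (EFin \o (g \* df)) ->
  abs_cont_on a b f ->
  {ae @lebesgue_measure R, forall t, t \in `[a, b] -> is_derive t 1 f (df t)} ->
  s_concave s `[a, b]%classic (fun t => `|df t| `^ q) ->
  let lam := Rintegral (@lebesgue_measure R) `[a, b] g in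
  `|Rintegral (@lebesgue_measure R) `[a, a + lam] f
    - Rintegral (@lebesgue_measure R) `[a, b] (f \* g)|
    <= 2 `^ ((s - 1) / q) *
       (lam ^+ 2 * `|df (a + lam / 2)|
        + (b - a - lam) ^+ 2 * `|df ((a + b + lam) / 2)|)
  /\
  `|Rintegral (@lebesgue_measure R) `[a, b] (f \* g)
    - Rintegral (@lebesgue_measure R) `[b - lam, b] f|
    <= 2 `^ ((s - 1) / q) *
       (lam ^+ 2 * `|df (b - lam / 2)|
        + (b - a - lam) ^+ 2 * `|df ((a + b - lam) / 2)|).
Proof.
move=> a0 ab s0 s1 q1 fi gi hg _ ac hae hs lam.
have q0 : 0 < q by lra.
have [N [mN N0 hN]] := hae.
have hder : forall t, a <= t <= b -> ~ N t -> is_derive t 1 f (df t).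
  move=> t ht nt; apply: contrapT => H; apply: nt; apply: hN => /= /(_ _) H'.
  by apply: H; apply: H'; rewrite in_itv /=.
have lam0 : 0 <= lam.
  by apply: Rintegral_ge0 => x; rewrite /= in_itv /= => /hg /andP[].
have lamb : lam <= b - a.
  rewrite -(measure_itv_cc (ltW ab)) -[fine _]mul1r -Rintegral_cst //.
  apply: le_Rintegral => //; first exact: csti.
  by move=> x; rewrite /= in_itv /= => /hg /andP[].
have hpw := pow_half s (ltW q1).
set C := 2 `^ (s / q) in hpw *.
set D := 2 `^ ((s - 1) / q) in hpw *.
have C0 : 0 <= C := powR_ge0 _ _.
have fgi := intMw fi gi hg.
split.
- set c := a + lam.
  have ac' : a <= c by rewrite /c; lra.
  have cb : c <= b by rewrite /c; lra.
  have [h1 _] := lip_piece s0 q0 hs ac mN N0 hder (lexx a) ac' cb.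
  have [_ h2] := lip_piece s0 q0 hs ac mN N0 hder ac' cb (lexx b).
  have wint : \int[LM]_(t in `[a, b]) g t = c - a by rewrite /c /lam; ring.
  have := main_split ac' cb fi gi hg wint h1 h2.
  have e1 : (a + c) / 2 = a + lam / 2 by rewrite /c; field.
  have e2 : (c + b) / 2 = (a + b + lam) / 2 by rewrite /c; field.
  rewrite e1 e2 => H.
  apply: le_trans H _.
  have -> : c - a = lam by rewrite /c; ring.
  have -> : b - c = b - a - lam by rewrite /c; ring.
  set X1 := `|df (a + lam / 2)|; set X2 := `|df ((a + b + lam) / 2)|.
  have P : 0 <= lam ^+ 2 * X1 + (b - a - lam) ^+ 2 * X2.
    by rewrite /X1 /X2 addr_ge0 // mulr_ge0 ?sqr_ge0 ?normr_ge0.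
  apply: le_trans (_ : C / 2 * (lam ^+ 2 * X1 + (b - a - lam) ^+ 2 * X2) <= _).
    rewrite le_eqVlt; apply/orP; left; apply/eqP; rewrite -/C; ring.
  by rewrite ler_wpM2r.
- set c := b - lam.
  have ac' : a <= c by rewrite /c; lra.
  have cb : c <= b by rewrite /c; lra.
  have [h1 _] := lip_piece s0 q0 hs ac mN N0 hder (lexx a) ac' cb.
  have [_ h2] := lip_piece s0 q0 hs ac mN N0 hder ac' cb (lexx b).
  have wi := intB' (csti a b 1) gi.
  have hw : forall t, a <= t <= b -> 0 <= 1 - g t <= 1.
    move=> t ht; have /andP[g0 g1] := hg t ht; apply/andP; split; lra.
  have wint : \int[LM]_(t in `[a, b]) (1 - g t) = c - a.
    rewrite RintegralB //; last exact: csti.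
    by rewrite Rintegral_cst // measure_itv_cc ?(ltW ab) // /c /lam; ring.
  have := main_split ac' cb fi wi hw wint h1 h2.
  have e1 : (a + c) / 2 = (a + b - lam) / 2 by rewrite /c; field.
  have e2 : (c + b) / 2 = b - lam / 2 by rewrite /c; field.
  rewrite e1 e2 => H.
  have E : \int[LM]_(t in `[a, b]) (f \* g) t - \int[LM]_(t in `[c, b]) f t =
     \int[LM]_(t in `[a, c]) f t - \int[LM]_(t in `[a, b]) (f t * (1 - g t)).
    rewrite (@eq_Rintegral _ _ _ LM _ (fun t : R => f t - f t * g t) (fun t => f t * (1 - g t))); last first.
      by move=> t _; ring.
    rewrite RintegralB // (split_int ac' cb fi).
    rewrite /GRing.mul_fun.
    ring.
  rewrite E; apply: le_trans H _.
  have -> : c - a = b - a - lam by rewrite /c; ring.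
  have -> : b - c = lam by rewrite /c; ring.
  set X1 := `|df (b - lam / 2)|; set X2 := `|df ((a + b - lam) / 2)|.
  have P : 0 <= lam ^+ 2 * X1 + (b - a - lam) ^+ 2 * X2.
    by rewrite /X1 /X2 addr_ge0 // mulr_ge0 ?sqr_ge0 ?normr_ge0.
  apply: le_trans (_ : C / 2 * (lam ^+ 2 * X1 + (b - a - lam) ^+ 2 * X2) <= _).
    rewrite le_eqVlt; apply/orP; left; apply/eqP; rewrite -/C; ring.
  by rewrite ler_wpM2r.
Qed.
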